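(* Let $G$ be a finite group, $X$ a finite $G$-set and $R$ an integral domain. Assume that for every $x\in X$ and every prime divisor $p$ of $[G:\mathrm{stab}_G(x)]$ one has $\{0\}\neq pR\neq R$. Then the ring $\mathrm{End}_{RG}(RX)$ has no central idempotent different from $0$ and $1$.
   Context: $RX$ denotes the permutation $RG$-module with $R$-basis $X$. *)

(* Defs.v *)
From HB Require Import structures.
From mathcomp Require Import all_boot all_order all_algebra all_fingroup.
Set Implicit Arguments. Unset Strict Implicit. Unset Printing Implicit Defensive.
Import GRing.Theory.
Local Open Scope ring_scope.

(* The permutation module RX is modelled as row vectors 'rV[R]_#|X|, the basis
   element x being the row vector with a 1 at position enum_rank x.
   The element g acts (on the right, row-vector convention) by the permutation
   matrix sending basis vector x to basis vector (to x g). *)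
Definition gperm_mx (R : nzRingType) (aT : finGroupType) (G : {set aT})
  (X : finType) (to : action G X) (g : aT) : 'M[R]_#|X| :=
  \matrix_(i, j) ((enum_val j == to (enum_val i) g)%:R).

Definition is_RG_endo (R : nzRingType) (aT : finGroupType) (G : {set aT})
  (X : finType) (to : action G X) (A : 'M[R]_#|X|) : Prop :=
  forall g, g \in G -> A *m gperm_mx R to g = gperm_mx R to g *m A.

Definition central_idem_RG_endo (R : nzRingType) (aT : finGroupType)
  (G : {set aT}) (X : finType) (to : action G X) (e : 'M[R]_#|X|) : Prop :=
  [/\ is_RG_endo to e, e *m e = e &
      forall f, is_RG_endo to f -> e *m f = f *m e].

(* Main.v *)
Require Import Defs.
From HB Require Import structures.
From mathcomp Require Import all_boot all_order all_algebra all_fingroup.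
From mathcomp Require Import ring.
From mathcomp Require Import fraction.
Set Implicit Arguments. Unset Strict Implicit. Unset Printing Implicit Defensive.
Import GRing.Theory.
Local Open Scope ring_scope.

Lemma base_aux (F : fieldType) n r (C : 'M[F]_(n, r)) (Rb : 'M[F]_(r, n)) B B' :
  B *m C = 1%:M -> Rb *m B' = 1%:M -> (C *m Rb) *m (C *m Rb) = C *m Rb ->
  Rb *m C = 1%:M.
Proof.
move=> BC RB AA.
have H1 : Rb *m C = B *m ((C *m Rb) *m (C *m Rb)) *m B'.
  by rewrite !mulmxA BC mul1mx -mulmxA RB mulmx1.
by rewrite H1 AA !mulmxA BC mul1mx RB.
Qed.

Lemma tr_idem (F : fieldType) n (A : 'M[F]_n) : A *m A = A -> \tr A = (\rank A)%:R.
Proof.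
move=> AA.
have [B BC] := row_fullP (col_base_full A).
have [B' RB] := row_freeP (row_base_free A).
have E := base_aux BC RB (etrans (congr2 _ (mulmx_base A) (mulmx_base A)) (etrans AA (esym (mulmx_base A)))).
by rewrite -{1}(mulmx_base A) mxtrace_mulC E mxtrace1.
Qed.

Lemma natr_nz (R : idomainType) (k : nat) :
  (0 < k)%N -> (forall p, prime p -> (p %| k)%N -> (p%:R : R) != 0) -> (k%:R : R) != 0.
Proof.
elim/ltn_ind: k => k IH k0 Hp.
case: (ltnP 1 k) => k1; last first.
  have k1' : k = 1%N by apply/eqP; rewrite eqn_leq k1 k0.
  by rewrite k1' oner_neq0.
have pk := pdiv_prime k1; have dk := pdiv_dvd k.
rewrite -(divnK dk) natrM mulf_neq0 //; last by apply: Hp.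
apply: IH.
- rewrite ltn_divLR ?prime_gt0 //.
  by rewrite -[X in (X < _)%N]muln1 ltn_pmul2l ?prime_gt1 // ltnW.
- by rewrite divn_gt0 ?prime_gt0 // dvdn_leq // ltnW.
- move=> p pp pd; apply: Hp => //; apply: dvdn_trans pd _.
  by rewrite dvdn_div.
Qed.

Lemma nt (R : idomainType) (m r : nat) (d : R) :
  (0 < m)%N ->
  (forall p, prime p -> (p %| m)%N -> (p%:R : R) != 0 /\ (p%:R : R) \notin GRing.unit) ->
  m%:R * d = r%:R -> exists a, r = (m * a)%N /\ d = a%:R.
Proof.
move=> m0 Hp E.
set g := gcdn r m.
have g0 : (0 < g)%N by rewrite gcdn_gt0 m0 orbT.
have Er : r = (r %/ g * g)%N by rewrite divnK // dvdn_gcdl.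
have Em : m = (m %/ g * g)%N by rewrite divnK // dvdn_gcdr.
set a0 := (r %/ g)%N in Er; set m1 := (m %/ g)%N in Em.
have gR : (g%:R : R) != 0.
  apply: natr_nz => // p pp pg.
  by case: (Hp p pp (dvdn_trans pg (dvdn_gcdr _ _))).
have E2 : m1%:R * d = a0%:R.
  apply/eqP; rewrite -subr_eq0; apply/eqP.
  apply: (mulfI gR); rewrite mulr0 mulrBr mulrA -natrM mulnC -Em E -natrM mulnC -Er.
  by rewrite subrr.
have m10 : (0 < m1)%N by move: m0; rewrite Em muln_gt0 => /andP[].
case: (ltnP 1 m1) => m11; last first.
  have m1e : m1 = 1%N by apply/eqP; rewrite eqn_leq m11 m10.
  exists a0; split; first by rewrite Er Em m1e mul1n mulnC.
  by rewrite -E2 m1e mul1r.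
exfalso.
set p := pdiv m1.
have pp : prime p := pdiv_prime m11.
have pm1 : (p %| m1)%N := pdiv_dvd m1.
have npa : ~~ (p %| a0)%N.
  apply/negP => pa.
  have : (p * g %| g)%N.
    rewrite dvdn_gcd {1}Er Em !dvdn_pmul2r //.
    by rewrite pa pm1.
  rewrite -{2}(mul1n g) dvdn_pmul2r // dvdn1 => /eqP p1.
  by move: pp; rewrite p1.
have a00 : (0 < a0)%N by case: (a0) npa => //; rewrite dvdn0.
have cop : gcdn a0 p = 1%N by apply/eqP; rewrite -[_ == 1%N]/(coprime a0 p) coprime_sym prime_coprime.
have [_ pm] : (p%:R : R) != 0 /\ (p%:R : R) \notin GRing.unit.
  by apply: Hp => //; apply: dvdn_trans pm1 _; rewrite Em dvdn_mulr.
case: (egcdnP p a00) => km kn Ekm _.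
rewrite cop in Ekm.
have Ek : (km%:R * a0%:R : R) = kn%:R * p%:R + 1 by rewrite -!natrM Ekm natrD.
rewrite -E2 -(divnK pm1) natrM in Ek.
have : (p%:R : R) \in GRing.unit.
  apply/unitrPr; exists ((km * (m1 %/ p))%:R * d - kn%:R).
  rewrite natrM.
  transitivity (km%:R * ((m1 %/ p)%:R * p%:R * d) - kn%:R * p%:R : R); first by ring.
  by rewrite Ek addrAC subrr add0r.
by rewrite (negbTE pm).
Qed.

Lemma sum_ordX (R : nzRingType) (X : finType) (F : X -> R) :
  \sum_(l : 'I_#|X|) F (enum_val l) = \sum_(x : X) F x.
Proof.
rewrite [RHS](reindex (@enum_val X X)) //=; exists enum_rank => x _; [exact: enum_valK | exact: enum_rankK].
Qed.

Lemma sum_ordX' (R : nzRingType) (X : finType) (F : 'I_#|X| -> R) :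
  \sum_(l : 'I_#|X|) F l = \sum_(x : X) F (enum_rank x).
Proof.
rewrite -(sum_ordX (fun x => F (enum_rank x))); apply: eq_bigr => l _.
by rewrite enum_valK.
Qed.

Lemma sum_deltar (R : nzRingType) (X : finType) (y : X) (F : X -> R) :
  \sum_x F x * ((y == x)%:R) = F y.
Proof.
rewrite (bigD1 y) //= eqxx mulr1 big1 ?addr0 // => x /negbTE.
by rewrite eq_sym => ->; rewrite mulr0.
Qed.

Lemma sum_deltal (R : nzRingType) (X : finType) (y : X) (F : X -> R) :
  \sum_x ((x == y)%:R) * F x = F y.
Proof.
rewrite (bigD1 y) //= eqxx mul1r big1 ?addr0 // => x /negbTE ->.
by rewrite mul0r.
Qed.

Section Act.
Variables (gT : finGroupType) (G : {group gT}) (X : finType) (to : action G X).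

Lemma kernel_endo (R : nzRingType) (k : X -> X -> R) :
  (forall g x y, g \in G -> k (to x g) (to y g) = k x y) ->
  is_RG_endo to (\matrix_(i, j) k (enum_val i) (enum_val j)).
Proof.
move=> kinv g gG; apply/matrixP => i j; rewrite !mxE.
under eq_bigr do rewrite !mxE.
rewrite (sum_ordX (fun x => k (enum_val i) x * ((enum_val j == to x g)%:R))).
under [RHS]eq_bigr do rewrite !mxE.
rewrite (sum_ordX (fun x => (x == to (enum_val i) g)%:R * k x (enum_val j))).
rewrite sum_deltal.
have E : forall x, (enum_val j == to x g) = (to (enum_val j) (g^-1)%g == x).
  move=> x; apply/eqP/eqP => [->|<-]; first by rewrite actKin.
  by rewrite actKVin.
under eq_bigr do rewrite E.
by rewrite sum_deltar -{2}(actKVin to gG (enum_val j)) kinv.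
Qed.

Lemma endo_inv (R : nzRingType) (A : 'M[R]_#|X|) g x y : is_RG_endo to A -> g \in G ->
  A (enum_rank (to x g)) (enum_rank (to y g)) = A (enum_rank x) (enum_rank y).
Proof.
move=> HA gG; have := congr1 (fun M : 'M[R]_#|X| => M (enum_rank x) (enum_rank (to y g))) (HA g gG).
rewrite !mxE /= !sum_ordX'.
under eq_bigr do rewrite mxE !enum_rankK.
under [X in _ = X -> _]eq_bigr do rewrite mxE !enum_rankK.
under eq_bigr do rewrite (inj_eq (act_inj to g)).
by rewrite sum_deltar sum_deltal => ->.
Qed.


Definition kmx (R : nzRingType) (k : X -> X -> R) : 'M[R]_#|X| :=
  \matrix_(i, j) k (enum_val i) (enum_val j).

Lemma kmxE (R : nzRingType) (k : X -> X -> R) x y :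
  kmx k (enum_rank x) (enum_rank y) = k x y.
Proof. by rewrite mxE !enum_rankK. Qed.

Lemma mul_kmx (R : nzRingType) (k1 k2 : X -> X -> R) :
  kmx k1 *m kmx k2 = kmx (fun x y => \sum_z k1 x z * k2 z y).
Proof.
apply/matrixP => i j; rewrite !mxE sum_ordX'; apply: eq_bigr => z _.
by rewrite !mxE enum_rankK.
Qed.

Lemma kmx_eq (R : nzRingType) (k1 k2 : X -> X -> R) :
  (forall x y, k1 x y = k2 x y) -> kmx k1 = kmx k2.
Proof. by move=> H; apply/matrixP => i j; rewrite !mxE H. Qed.

Lemma mx_kmx (R : nzRingType) (A : 'M[R]_#|X|) :
  A = kmx (fun x y => A (enum_rank x) (enum_rank y)).
Proof. by apply/matrixP => i j; rewrite mxE !enum_valK. Qed.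

Definition orb (x : X) := orbit to G x.

Lemma orb_act x g : g \in G -> orb (to x g) = orb x.
Proof. by move=> gG; apply: orbit_act_in. Qed.

Definition pim (R : nzRingType) (A : {set X}) : 'M[R]_#|X| :=
  kmx (fun x y => (x == y)%:R * (orb x == A)%:R).

Definition Jm (R : nzRingType) (A B : {set X}) : 'M[R]_#|X| :=
  kmx (fun x y => (orb x == A)%:R * (orb y == B)%:R).

Lemma pim_endo (R : nzRingType) A : is_RG_endo to (pim R A).
Proof. by apply: kernel_endo => g x y gG; rewrite (inj_eq (act_inj to g)) orb_act. Qed.

Lemma Jm_endo (R : nzRingType) A B : is_RG_endo to (Jm R A B).
Proof. by apply: kernel_endo => g x y gG; rewrite !orb_act. Qed.

Lemma sum_deltal' (R : nzRingType) (y : X) (F : X -> R) :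
  \sum_x ((y == x)%:R) * F x = F y.
Proof. by under eq_bigr do rewrite eq_sym; rewrite sum_deltal. Qed.

Lemma pim_idem (R : nzRingType) A : pim R A *m pim R A = pim R A.
Proof.
rewrite mul_kmx; apply: kmx_eq => x y.
under eq_bigr do rewrite -!mulrA.
rewrite sum_deltal'.
by case: (x == y) (orb x == A) => [] []; rewrite /= ?mulr0 ?mul0r ?mulr1 ?mul1r.
Qed.

Lemma pimJ (R : nzRingType) A B : pim R A *m Jm R A B = Jm R A B.
Proof.
rewrite mul_kmx; apply: kmx_eq => x y.
under eq_bigr do rewrite -!mulrA.
rewrite sum_deltal'.
by case: (orb x == A); rewrite ?mulr0 ?mul0r ?mulr1 ?mul1r.
Qed.

Lemma Jpim (R : nzRingType) A B : Jm R A B *m pim R B = Jm R A B.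
Proof.
rewrite mul_kmx; apply: kmx_eq => x y.
rewrite (eq_bigr (fun z => ((orb x == A)%:R * (orb z == B)%:R * (orb z == B)%:R) * (y == z)%:R)).
  rewrite sum_deltar.
  by case: (orb y == B) (orb x == A) => [] []; rewrite /= ?mulr0 ?mul0r ?mulr1 ?mul1r.
move=> z _; rewrite (eq_sym y z).
by case: (z == y) (orb z == B) (orb x == A) => [] [] []; rewrite /= ?mulr0 ?mul0r ?mulr1 ?mul1r.
Qed.

Lemma mul_pimr (R : nzRingType) (M : 'M[R]_#|X|) A x y :
  (M *m pim R A) (enum_rank x) (enum_rank y) = M (enum_rank x) (enum_rank y) * (orb y == A)%:R.
Proof.
rewrite [M in M *m _]mx_kmx mul_kmx kmxE.
rewrite (eq_bigr (fun z => (M (enum_rank x) (enum_rank z) * (orb z == A)%:R) * (y == z)%:R)).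
  by rewrite sum_deltar.
move=> z _; rewrite (eq_sym y z).
by rewrite -mulrA; congr (_ * _); symmetry; apply: commr_nat.
Qed.


Lemma orbE x x0 : (orb x == orb x0) = (x \in orb x0).
Proof.
apply/eqP/idP => [<-|H]; first exact: orbit_refl.
by apply/orbit_in_eqP.
Qed.

Lemma sum_orb (R : nzRingType) (F : X -> R) x0 :
  \sum_x F x * (orb x == orb x0)%:R = \sum_(x in orb x0) F x.
Proof.
rewrite [RHS]big_mkcond; apply: eq_bigr => x _; rewrite orbE.
by case: (x \in orb x0); rewrite ?mulr1 ?mulr0.
Qed.

Lemma rank_sum (F : fieldType) m n (I : finType) (P : pred I) (M : I -> 'M[F]_(m, n)) :
  (\rank (\sum_(i | P i) M i)%R <= \sum_(i | P i) \rank (M i))%N.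
Proof.
apply: (big_ind2 (fun (A : 'M[F]_(m, n)) k => \rank A <= k)%N); first by rewrite mxrank0.
  by move=> A1 k1 A2 k2 h1 h2; apply: leq_trans (mxrank_add _ _) (leq_add h1 h2).
by [].
Qed.

Lemma rank_pim (F : fieldType) x0 : (\rank (pim F (orb x0)) <= #|orb x0|)%N.
Proof.
have -> : pim F (orb x0) = \sum_(x in orb x0) delta_mx (enum_rank x) (enum_rank x).
  apply/matrixP => i j; rewrite summxE -[i]enum_valK -[j]enum_valK /pim kmxE.
  set u := enum_val i; set v := enum_val j.
  rewrite big_mkcond /=.
  rewrite (eq_bigr (fun x => (u == x)%:R * (((v == x) && (x \in orb x0))%:R : F))).
    by rewrite sum_deltal' orbE eq_sym -mulnb natrM.
  move=> x _; rewrite mxE !(inj_eq enum_rank_inj).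
  by case: (u == x); case: (v == x); case: (x \in orb x0); rewrite /= ?mul1r ?mul0r.
apply: leq_trans (rank_sum _ _) _.
by rewrite (eq_bigr (fun _ => 1%N)) ?sum1_card // => x _; rewrite mxrank_delta.
Qed.


Lemma map_kmx (R S : nzRingType) (phi : {rmorphism R -> S}) (k : X -> X -> R) :
  map_mx phi (kmx k) = kmx (fun x y => phi (k x y)).
Proof. by apply/matrixP => i j; rewrite !mxE. Qed.

Lemma map_pim (R S : nzRingType) (phi : {rmorphism R -> S}) A :
  map_mx phi (pim R A) = pim S A.
Proof. by rewrite map_kmx; apply: kmx_eq => x y; rewrite rmorphM /= !rmorph_nat. Qed.

Lemma orbit_claim (R : idomainType) (e : 'M[R]_#|X|) x0 :
  (forall (x : X) (p : nat), prime p -> (p %| #|G : 'C_G[x | to]|%g)%N ->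
     (p%:R : R) != 0 /\ (p%:R : R) \notin GRing.unit) ->
  central_idem_RG_endo to e ->
  e *m pim R (orb x0) = 0 \/ e *m pim R (orb x0) = pim R (orb x0).
Proof.
move=> Hp [Ee Eidem Ecen].
set A := orb x0; set P := pim R A.
have Pe : e *m P = P *m e := Ecen P (pim_endo R A).
have PP : P *m P = P := pim_idem R A.
set f := e *m P.
have ff : f *m f = f.
  by rewrite /f mulmxA -(mulmxA e P e) -Pe mulmxA Eidem -mulmxA PP.
have fP : f *m P = f by rewrite /f -mulmxA PP.
have Pf : P *m f = f by rewrite /f mulmxA -Pe -mulmxA PP.
set f' := P - f.
have ff' : f' *m f' = f'.
  by rewrite /f' mulmxBl !mulmxBr PP fP Pf ff subrr subr0.
have f'P : f' *m P = f' by rewrite /f' mulmxBl PP fP.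
set m := #|A|.
set d := e (enum_rank x0) (enum_rank x0).
have Hm : (0 < m)%N by apply/card_gt0P; exists x0; apply: orbit_refl.
have Hpm : forall p, prime p -> (p %| m)%N -> (p%:R : R) != 0 /\ (p%:R : R) \notin GRing.unit.
  by move=> p pp pm; apply: (Hp x0) => //; rewrite -card_orbit_in.
have trP : \tr P = m%:R.
  rewrite /mxtrace sum_ordX'.
  rewrite (eq_bigr (fun x => 1 * (orb x == orb x0)%:R)); last first.
    by move=> x _; rewrite /P /pim kmxE eqxx mul1r.
  by rewrite sum_orb sumr_const.
have trf : \tr f = m%:R * d.
  rewrite /mxtrace sum_ordX'.
  under eq_bigr do rewrite /f mul_pimr.
  rewrite sum_orb (eq_bigr (fun _ => d)) ?sumr_const ?mulr_natl //.
  move=> x /orbitP [g gG <-].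
  by rewrite /d endo_inv.
have trf' : \tr f' = m%:R * (1 - d) by rewrite /f' raddfB /= trP trf mulrBr mulr1.
pose K := {fraction R}.
pose phi := (@tofrac R).
have rk : forall M : 'M[R]_#|X|, M *m M = M ->
    \tr M = (\rank (map_mx phi M))%:R.
  move=> M HM; apply/eqP; rewrite -tofrac_eq.
  rewrite -(trace_map_mx (@tofrac R)) tr_idem; last by rewrite -map_mxM HM.
  by rewrite rmorph_nat.
have rkle : forall M : 'M[R]_#|X|, M *m P = M -> (\rank (map_mx phi M) <= m)%N.
  move=> M HM; rewrite -HM map_mxM.
  apply: leq_trans (mxrankM_maxr _ _) _.
  by rewrite /P map_pim rank_pim.
have z0 : forall M : 'M[R]_#|X|, \rank (map_mx phi M) = 0%N -> M = 0.
  move=> M /eqP; rewrite mxrank_eq0 => /eqP H; apply/matrixP => i j.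
  have := congr1 (fun N : 'M[K]_#|X| => N i j) H; rewrite !mxE => /eqP.
  by rewrite tofrac_eq0 => /eqP.
have [a [ra da]] := nt Hm Hpm (etrans (esym trf) (rk f ff)).
have [a' [ra' da']] := nt Hm Hpm (etrans (esym trf') (rk f' ff')).
have la := rkle f fP; have la' := rkle f' f'P.
rewrite ra -{2}(muln1 m) leq_pmul2l // in la.
rewrite ra' -{2}(muln1 m) leq_pmul2l // in la'.
case: a ra da la => [|[|//]] ra da _.
  by left; apply: z0; rewrite ra muln0.
case: a' ra' da' la' => [|[|//]] ra' da' _.
  right; apply/eqP; rewrite eq_sym -subr_eq0; apply/eqP.
  by apply: (z0 f'); rewrite ra' muln0.
exfalso; move: da'; rewrite da subrr => /eqP; rewrite eq_sym oner_eq0.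
by [].
Qed.

End Act.

Unset Implicit Arguments.

Theorem proposition3p3 (gT : finGroupType) (G : {group gT}) (X : finType)
  (to : action G X) (R : idomainType) :
  (forall (x : X) (p : nat), prime p -> (p %| #|G : 'C_G[x | to]|%g)%N ->
     (p%:R : R) != 0 /\ (p%:R : R) \notin GRing.unit) ->
  forall e : 'M[R]_#|X|, central_idem_RG_endo to e -> e = 0 \/ e = 1%:M.
Proof.
move=> Hp e He.
have [Ee Eidem Ecen] := He.
have claim := fun x => @orbit_claim gT G X to R e x Hp He.
have entry : forall x y, e (enum_rank x) (enum_rank y) =
    (e *m pim to R (orb to y)) (enum_rank x) (enum_rank y).
  by move=> x y; rewrite mul_pimr eqxx mulr1.
case: (boolP [exists x, e *m pim to R (orb to x) == 0]) => [/existsP [x /eqP Hx] | Hn].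
  have Hall : forall y, e *m pim to R (orb to y) = 0.
    move=> y; case: (claim y) => // Hy; exfalso.
    set J := Jm to R (orb to x) (orb to y).
    have EJ : e *m J = 0 by rewrite /J -pimJ mulmxA Hx mul0mx.
    have JE : J *m e = J.
      rewrite /J -{1}(Jpim to R (orb to x) (orb to y)) -mulmxA.
      by rewrite -(Ecen _ (pim_endo to R (orb to y))) Hy Jpim.
    have J0 : J = 0 by rewrite -JE -(Ecen J (Jm_endo to R _ _)) EJ.
    move/matrixP: J0 => /(_ (enum_rank x) (enum_rank y)).
    rewrite /J /Jm kmxE !eqxx mxE mul1r => /eqP; by rewrite oner_eq0.
  left; apply/matrixP => i j; rewrite -[i]enum_valK -[j]enum_valK entry Hall.
  by rewrite !mxE.
right.
have Hall : forall y, e *m pim to R (orb to y) = pim to R (orb to y).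
  move=> y; case: (claim y) => // Hy; exfalso.
  by move: Hn; rewrite negb_exists => /forallP /(_ y); rewrite Hy eqxx.
apply/matrixP => i j; rewrite -[i]enum_valK -[j]enum_valK entry Hall.
rewrite /pim kmxE !mxE (inj_eq enum_rank_inj).
by case: eqP => [->|_]; rewrite ?eqxx ?mulr1 ?mul0r.
Qed.
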